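(* Let $V=V_1\oplus V_2\oplus V_4$ and $R=\mathcal{O}(V)^{\mathrm{SL}_2(\mathbb{C})}$. Then $R$ has no homogeneous system of parameters with degrees $2,2,3,3,3,4,5$; indeed, all invariants of degrees $2$ up to $5$ vanish at $(x,0,4xy^3)$, which is not in the nullcone of $V$.
   Context: $V_k$ is the $\mathrm{SL}_2(\mathbb{C})$-module of complex binary forms of degree $k$ in $x,y$; $R$ is the graded algebra of invariant polynomial functions on $V$. A homogeneous system of parameters is a set of algebraically independent homogeneous elements of positive degree over whose generated subalgebra $R$ is integral. The nullcone of $V$ is the set of points of $V$ at which all homogeneous invariants of positive degree vanish. *)

(* Defs.v *)
From HB Require Import structures.
From Stdlib Require Import Rdefinitions.
From mathcomp Require Import all_boot all_algebra.
From mathcomp Require Import complex.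
From mathcomp.reals_stdlib Require Import Rstruct.
From mathcomp Require Import mpoly.

Set Implicit Arguments.
Unset Strict Implicit.
Unset Printing Implicit Defensive.
Import GRing.Theory.
Local Open Scope ring_scope.

Notation C := (Rdefinitions.R[i]).

Definition bx : {mpoly C[2]} := 'X_(@ord0 1).
Definition by_ : {mpoly C[2]} := 'X_(@ord_max 1).

(* The binary form of degree k with coefficient vector c:
   sum_{i=0}^k c_i x^(k-i) y^i.  V_k is identified with 'I_k.+1 -> C. *)
Definition bform (k : nat) (c : 'I_k.+1 -> C) : {mpoly C[2]} :=
  \sum_(i < k.+1) c i *: (bx ^+ (k - i) * by_ ^+ i).

Definition gsubst (g : 'M[C]_2) : 2.-tuple {mpoly C[2]} :=
  [tuple of [:: g ord0 ord0 *: bx + g ord0 ord_max *: by_ ;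
                g ord_max ord0 *: bx + g ord_max ord_max *: by_]].

Definition form_act_rel (g : 'M[C]_2) (k : nat) (c c' : 'I_k.+1 -> C) : Prop :=
  bform c' = bform c \mPo gsubst g.

(* V = V_1 + V_2 + V_4, a point is given by its 2 + 3 + 5 = 10 coordinates. *)
Definition pt1 (v : 'I_10 -> C) : 'I_2 -> C := fun j => v (inord j).
Definition pt2 (v : 'I_10 -> C) : 'I_3 -> C := fun j => v (inord (2 + j)).
Definition pt4 (v : 'I_10 -> C) : 'I_5 -> C := fun j => v (inord (5 + j)).

Definition act_rel (g : 'M[C]_2) (v w : 'I_10 -> C) : Prop :=
  [/\ form_act_rel g (pt1 v) (pt1 w),
      form_act_rel g (pt2 v) (pt2 w) &
      form_act_rel g (pt4 v) (pt4 w)].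

Definition SL2invariant (P : {mpoly C[10]}) : Prop :=
  forall g : 'M[C]_2, \det g = 1 ->
  forall v w : 'I_10 -> C, act_rel g v w -> P.@[w] = P.@[v].

Definition is_hsop (n : nat) (f : 'I_n -> {mpoly C[10]}) : Prop :=
  [/\
      forall i, SL2invariant (f i) /\ exists2 d, (0 < d)%N & f i \is d.-homog,
      forall q : {mpoly C[n]}, q \mPo [tuple f i | i < n] = 0 -> q = 0 &
      forall P, SL2invariant P ->
        exists2 Q : {poly {mpoly C[n]}}, Q \is monic &
          (map_poly (comp_mpoly [tuple f i | i < n]) Q).[P] = 0].

Definition in_nullcone (v : 'I_10 -> C) : Prop :=
  forall P : {mpoly C[10]}, SL2invariant P ->
  forall d, (0 < d)%N -> P \is d.-homog -> P.@[v] = 0.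

(* The point (x, 0, 4 x y^3) of V_1 + V_2 + V_4: coordinate 0 is the coefficient
   of x in V_1, coordinate 5 + 3 = 8 is the coefficient of x y^3 in V_4. *)
Definition p0 : 'I_10 -> C :=
  fun i => if val i == 0%N then 1 else if val i == 8%N then 4%:R else 0.

(* Main.v *)
Require Import Defs.
From HB Require Import structures.
From Stdlib Require Import Rdefinitions.
From mathcomp Require Import all_boot all_algebra.
From mathcomp Require Import complex.
From mathcomp.reals_stdlib Require Import Rstruct.
From mathcomp Require Import mpoly.
From mathcomp Require Import ring.
From mathcomp Require Import zify.
Import GRing.Theory Num.Theory.
Local Open Scope ring_scope.


Definition mon (k : nat) (j : nat) : 'X_{1..2} :=
  (U_(@ord0 1) *+ (k - j) + U_(@ord_max 1) *+ j)%MM.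

Lemma mon_max k j : mon k j (@ord_max 1) = j.
Proof. by rewrite /mon mnmDE !mulmnE !mnm1E /= mul1n. Qed.

Lemma bformE k (c : 'I_k.+1 -> C) : bform c = \sum_(i < k.+1) c i *: 'X_[mon k i].
Proof.
apply: eq_bigr => i _; congr (_ *: _).
by rewrite /bx /by_ !mpolyXn -mpolyXD.
Qed.

Lemma bform_coef k (c : 'I_k.+1 -> C) (j : 'I_k.+1) : (bform c)@_(mon k j) = c j.
Proof.
rewrite bformE raddf_sum /= (bigD1 j) //= mcoeffZ mcoeffX eqxx mulr1.
rewrite big1 ?addr0 // => i hij; rewrite mcoeffZ mcoeffX.
case: eqP => [h|]; last by rewrite mulr0.
by move: hij; have := congr1 (fun m : 'X_{1..2} => m (@ord_max 1)) h; rewrite !mon_max => /val_inj ->; rewrite eqxx.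
Qed.

Lemma bform_inj k (c c' : 'I_k.+1 -> C) : bform c = bform c' -> forall j, c j = c' j.
Proof. by move=> h j; rewrite -bform_coef h bform_coef. Qed.

Lemma cX0 (g : 'M[C]_2) : bx \mPo gsubst g = g ord0 ord0 *: bx + g ord0 ord_max *: by_.
Proof. by rewrite /bx comp_mpolyXU. Qed.
Lemma cX1 (g : 'M[C]_2) : by_ \mPo gsubst g = g ord_max ord0 *: bx + g ord_max ord_max *: by_.
Proof. by rewrite /by_ comp_mpolyXU. Qed.
Lemma cM (lq : 2.-tuple {mpoly C[2]}) (p q : {mpoly C[2]}) : (p*q) \mPo lq = (p \mPo lq) * (q \mPo lq).
Proof. exact: rmorphM. Qed.
Lemma cXn (lq : 2.-tuple {mpoly C[2]}) (p : {mpoly C[2]}) k : (p ^+ k) \mPo lq = (p \mPo lq) ^+ k.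
Proof. exact: rmorphXn. Qed.

Definition act1n (a b c d : C) (f : 'I_2 -> C) (j : nat) : C :=
  match j with
  | 0 => (a) * f (inord 0) + (c) * f (inord 1)
  | _ => (b) * f (inord 0) + (d) * f (inord 1)
  end.
Definition act1 (a b c d : C) (f : 'I_2 -> C) : 'I_2 -> C := fun j => act1n a b c d f j.

Definition act2n (a b c d : C) (f : 'I_3 -> C) (j : nat) : C :=
  match j with
  | 0 => (a^+2) * f (inord 0) + (a*c) * f (inord 1) + (c^+2) * f (inord 2)
  | 1 => (2%:R*a*b) * f (inord 0) + (b*c + a*d) * f (inord 1) + (2%:R*c*d) * f (inord 2)
  | _ => (b^+2) * f (inord 0) + (b*d) * f (inord 1) + (d^+2) * f (inord 2)
  end.
Definition act2 (a b c d : C) (f : 'I_3 -> C) : 'I_3 -> C := fun j => act2n a b c d f j.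

Definition act4n (a b c d : C) (f : 'I_5 -> C) (j : nat) : C :=
  match j with
  | 0 => (a^+4) * f (inord 0) + (a^+3*c) * f (inord 1) + (a^+2*c^+2) * f (inord 2) + (a*c^+3) * f (inord 3) + (c^+4) * f (inord 4)
  | 1 => (4%:R*a^+3*b) * f (inord 0) + (3%:R*a^+2*b*c + a^+3*d) * f (inord 1) + (2%:R*a*b*c^+2 + 2%:R*a^+2*c*d) * f (inord 2) + (b*c^+3 + 3%:R*a*c^+2*d) * f (inord 3) + (4%:R*c^+3*d) * f (inord 4)
  | 2 => (6%:R*a^+2*b^+2) * f (inord 0) + (3%:R*a*b^+2*c + 3%:R*a^+2*b*d) * f (inord 1) + (b^+2*c^+2 + 4%:R*a*b*c*d + a^+2*d^+2) * f (inord 2) + (3%:R*b*c^+2*d + 3%:R*a*c*d^+2) * f (inord 3) + (6%:R*c^+2*d^+2) * f (inord 4)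
  | 3 => (4%:R*a*b^+3) * f (inord 0) + (b^+3*c + 3%:R*a*b^+2*d) * f (inord 1) + (2%:R*b^+2*c*d + 2%:R*a*b*d^+2) * f (inord 2) + (3%:R*b*c*d^+2 + a*d^+3) * f (inord 3) + (4%:R*c*d^+3) * f (inord 4)
  | _ => (b^+4) * f (inord 0) + (b^+3*d) * f (inord 1) + (b^+2*d^+2) * f (inord 2) + (b*d^+3) * f (inord 3) + (d^+4) * f (inord 4)
  end.
Definition act4 (a b c d : C) (f : 'I_5 -> C) : 'I_5 -> C := fun j => act4n a b c d f j.

Definition actVn (a b c d : C) (v : 'I_10 -> C) (i : nat) : C :=
  match i with
  | 0 => (a) * v (inord 0) + (c) * v (inord 1)
  | 1 => (b) * v (inord 0) + (d) * v (inord 1)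
  | 2 => (a^+2) * v (inord 2) + (a*c) * v (inord 3) + (c^+2) * v (inord 4)
  | 3 => (2%:R*a*b) * v (inord 2) + (b*c + a*d) * v (inord 3) + (2%:R*c*d) * v (inord 4)
  | 4 => (b^+2) * v (inord 2) + (b*d) * v (inord 3) + (d^+2) * v (inord 4)
  | 5 => (a^+4) * v (inord 5) + (a^+3*c) * v (inord 6) + (a^+2*c^+2) * v (inord 7) + (a*c^+3) * v (inord 8) + (c^+4) * v (inord 9)
  | 6 => (4%:R*a^+3*b) * v (inord 5) + (3%:R*a^+2*b*c + a^+3*d) * v (inord 6) + (2%:R*a*b*c^+2 + 2%:R*a^+2*c*d) * v (inord 7) + (b*c^+3 + 3%:R*a*c^+2*d) * v (inord 8) + (4%:R*c^+3*d) * v (inord 9)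
  | 7 => (6%:R*a^+2*b^+2) * v (inord 5) + (3%:R*a*b^+2*c + 3%:R*a^+2*b*d) * v (inord 6) + (b^+2*c^+2 + 4%:R*a*b*c*d + a^+2*d^+2) * v (inord 7) + (3%:R*b*c^+2*d + 3%:R*a*c*d^+2) * v (inord 8) + (6%:R*c^+2*d^+2) * v (inord 9)
  | 8 => (4%:R*a*b^+3) * v (inord 5) + (b^+3*c + 3%:R*a*b^+2*d) * v (inord 6) + (2%:R*b^+2*c*d + 2%:R*a*b*d^+2) * v (inord 7) + (3%:R*b*c*d^+2 + a*d^+3) * v (inord 8) + (4%:R*c*d^+3) * v (inord 9)
  | _ => (b^+4) * v (inord 5) + (b^+3*d) * v (inord 6) + (b^+2*d^+2) * v (inord 7) + (b*d^+3) * v (inord 8) + (d^+4) * v (inord 9)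
  end.
Definition actV (a b c d : C) (v : 'I_10 -> C) : 'I_10 -> C := fun i => actVn a b c d v i.

Lemma bform_exp1 (c : 'I_2 -> C) : bform c =
  c (inord 0) *: (bx ^+ 1 * by_ ^+ 0) + (c (inord 1) *: (bx ^+ 0 * by_ ^+ 1) + 0).
Proof.
rewrite /bform (eq_bigr (fun i : 'I_2 => c (inord i) *: (bx ^+ (1 - i) * by_ ^+ i))); last first.
  by move=> i _; rewrite inord_val.
rewrite -(big_mkord xpredT (fun i => c (inord i) *: (bx ^+ (1 - i) * by_ ^+ i))).
by rewrite /index_iota /= !big_cons big_nil.
Qed.

Lemma act1E a b c d f j : (j < 2)%N -> act1 a b c d f (inord j) = act1n a b c d f j.
Proof. by move=> hj; rewrite /act1 inordK. Qed.

Lemma comp1 (g : 'M[C]_2) f : bform f \mPo gsubst g =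
  bform (act1 (g ord0 ord0) (g ord0 ord_max) (g ord_max ord0) (g ord_max ord_max) f).
Proof.
rewrite [RHS]bform_exp1 !act1E //.
rewrite bform_exp1 !comp_mpolyD !comp_mpolyZ comp_mpoly0 !cM !cXn !cX0 !cX1.
rewrite -!mul_mpolyC /act1n.
ring.
Qed.

Lemma bform_exp2 (c : 'I_3 -> C) : bform c =
  c (inord 0) *: (bx ^+ 2 * by_ ^+ 0) + (c (inord 1) *: (bx ^+ 1 * by_ ^+ 1) + (c (inord 2) *: (bx ^+ 0 * by_ ^+ 2) + 0)).
Proof.
rewrite /bform (eq_bigr (fun i : 'I_3 => c (inord i) *: (bx ^+ (2 - i) * by_ ^+ i))); last first.
  by move=> i _; rewrite inord_val.
rewrite -(big_mkord xpredT (fun i => c (inord i) *: (bx ^+ (2 - i) * by_ ^+ i))).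
by rewrite /index_iota /= !big_cons big_nil.
Qed.

Lemma act2E a b c d f j : (j < 3)%N -> act2 a b c d f (inord j) = act2n a b c d f j.
Proof. by move=> hj; rewrite /act2 inordK. Qed.

Lemma comp2 (g : 'M[C]_2) f : bform f \mPo gsubst g =
  bform (act2 (g ord0 ord0) (g ord0 ord_max) (g ord_max ord0) (g ord_max ord_max) f).
Proof.
rewrite [RHS]bform_exp2 !act2E //.
rewrite bform_exp2 !comp_mpolyD !comp_mpolyZ comp_mpoly0 !cM !cXn !cX0 !cX1.
rewrite -!mul_mpolyC /act2n.
ring.
Qed.

Lemma bform_exp4 (c : 'I_5 -> C) : bform c =
  c (inord 0) *: (bx ^+ 4 * by_ ^+ 0) + (c (inord 1) *: (bx ^+ 3 * by_ ^+ 1) + (c (inord 2) *: (bx ^+ 2 * by_ ^+ 2) + (c (inord 3) *: (bx ^+ 1 * by_ ^+ 3) + (c (inord 4) *: (bx ^+ 0 * by_ ^+ 4) + 0)))).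
Proof.
rewrite /bform (eq_bigr (fun i : 'I_5 => c (inord i) *: (bx ^+ (4 - i) * by_ ^+ i))); last first.
  by move=> i _; rewrite inord_val.
rewrite -(big_mkord xpredT (fun i => c (inord i) *: (bx ^+ (4 - i) * by_ ^+ i))).
by rewrite /index_iota /= !big_cons big_nil.
Qed.

Lemma act4E a b c d f j : (j < 5)%N -> act4 a b c d f (inord j) = act4n a b c d f j.
Proof. by move=> hj; rewrite /act4 inordK. Qed.

Lemma comp4 (g : 'M[C]_2) f : bform f \mPo gsubst g =
  bform (act4 (g ord0 ord0) (g ord0 ord_max) (g ord_max ord0) (g ord_max ord_max) f).
Proof.
rewrite [RHS]bform_exp4 !act4E //.
rewrite bform_exp4 !comp_mpolyD !comp_mpolyZ comp_mpoly0 !cM !cXn !cX0 !cX1.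
rewrite -!mul_mpolyC /act4n.
ring.
Qed.


Lemma bform_ext k (c c' : 'I_k.+1 -> C) : c =1 c' -> bform c = bform c'.
Proof. by move=> h; apply: eq_bigr => i _; rewrite h. Qed.

Lemma act1V a b c d v (j : 'I_2) : act1 a b c d (pt1 v) j = actV a b c d v (inord j).
Proof. case: j => [[|[|m]] hj]; last by lia.
all: by rewrite /act1 /actV /pt1; cbn [act1n actVn nat_of_ord]; rewrite !inordK. Qed.
Lemma act2V a b c d v (j : 'I_3) : act2 a b c d (pt2 v) j = actV a b c d v (inord (2 + j)).
Proof. case: j => [[|[|[|m]]] hj]; last by lia.
all: by rewrite /act2 /actV /pt2; cbn [act2n actVn nat_of_ord addn addn_rec Nat.add]; rewrite !inordK. Qed.
Lemma act4V a b c d v (j : 'I_5) : act4 a b c d (pt4 v) j = actV a b c d v (inord (5 + j)).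
Proof. case: j => [[|[|[|[|[|m]]]]] hj]; last by lia.
all: by rewrite /act4 /actV /pt4; cbn [act4n actVn nat_of_ord addn addn_rec Nat.add]; rewrite !inordK. Qed.

Lemma act_relP (g : 'M[C]_2) v w :
  act_rel g v w <-> (forall i : 'I_10, w i = actV (g ord0 ord0) (g ord0 ord_max) (g ord_max ord0) (g ord_max ord_max) v i).
Proof.
split.
  case=> h1 h2 h4 i.
  move: h1 h2 h4; rewrite /form_act_rel comp1 comp2 comp4.
  move=> /bform_inj h1 /bform_inj h2 /bform_inj h4.
  rewrite -(inord_val i).
  have hi := ltn_ord i.
  case: (ltnP i 2) => hi2.
    have := h1 (inord i); rewrite act1V /pt1 !inordK //.
  case: (ltnP i 5) => hi5.
    have := h2 (inord (i - 2)); rewrite act2V /pt2 !inordK ?subnKC //; lia.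
  have := h4 (inord (i - 5)); rewrite act4V /pt4 !inordK ?subnKC //; lia.
move=> H; split; rewrite /form_act_rel ?comp1 ?comp2 ?comp4; apply: bform_ext => j.
- by rewrite act1V /pt1 H.
- by rewrite act2V /pt2 H.
- by rewrite act4V /pt4 H.
Qed.


Definition Ig {R : comRingType} (z : 'I_10 -> R) : R :=
  ((((((((((- ((z (inord 8) * z (inord 8) * z (inord 0) * z (inord 0) * z (inord 0) * z (inord 0)) *+ 3)) + ((z (inord 7) * z (inord 9) * z (inord 0) * z (inord 0) * z (inord 0) * z (inord 0)) *+ 8)) + ((z (inord 7) * z (inord 8) * z (inord 0) * z (inord 0) * z (inord 0) * z (inord 1)) *+ 4)) - ((z (inord 7) * z (inord 7) * z (inord 0) * z (inord 0) * z (inord 1) * z (inord 1)) *+ 4)) - ((z (inord 6) * z (inord 9) * z (inord 0) * z (inord 0) * z (inord 0) * z (inord 1)) *+ 24)) + ((z (inord 6) * z (inord 8) * z (inord 0) * z (inord 0) * z (inord 1) * z (inord 1)) *+ 6)) + ((z (inord 6) * z (inord 7) * z (inord 0) * z (inord 1) * z (inord 1) * z (inord 1)) *+ 4)) - ((z (inord 6) * z (inord 6) * z (inord 1) * z (inord 1) * z (inord 1) * z (inord 1)) *+ 3)) + ((z (inord 5) * z (inord 9) * z (inord 0) * z (inord 0) * z (inord 1) * z (inord 1)) *+ 48)) - ((z (inord 5) * z (inord 8) * z (inord 0) * z (inord 1) * z (inord 1) * z (inord 1)) *+ 24)) + ((z (inord 5) * z (inord 7) * z (inord 1) * z (inord 1)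 * z (inord 1) * z (inord 1)) *+ 8).

Lemma actVE a b c d v k : (k < 10)%N -> actV a b c d v (inord k) = actVn a b c d v k.
Proof. by move=> hk; rewrite /actV inordK. Qed.

Lemma Ig_inv a b c d v : Ig (actV a b c d v) = (a*d - b*c)^+6 * Ig v.
Proof.
rewrite /Ig !actVE //; cbn [actVn].
move: (v (inord 0)) (v (inord 1)) (v (inord 2)) (v (inord 3)) (v (inord 4)) (v (inord 5)) (v (inord 6)) (v (inord 7)) (v (inord 8)) (v (inord 9)) => v0 v1 v2 v3 v4 v5 v6 v7 v8 v9.
ring.
Qed.

Definition Ipoly : {mpoly C[10]} := Ig (fun i => 'X_i).

Lemma Ig_morph {R S : comNzRingType} (f : {rmorphism R -> S}) (z : 'I_10 -> R) :
  f (Ig z) = Ig (fun i => f (z i)).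
Proof. by rewrite /Ig !rmorphD ?rmorphB !rmorphN !rmorphMn !rmorphM. Qed.

Lemma Ig_ext {R : comNzRingType} (z z' : 'I_10 -> R) : z =1 z' -> Ig z = Ig z'.
Proof. by move=> h; rewrite /Ig !h. Qed.

Lemma Ipoly_eval v : Ipoly.@[v] = Ig v.
Proof.
rewrite /Ipoly (@Ig_morph _ _ (meval v) (fun i => 'X_i)).
by apply: Ig_ext => i; exact: mevalXU.
Qed.

Lemma homX (i : 'I_10) : ('X_i : {mpoly C[10]}) \is 1.-homog.
Proof. by rewrite dhomogX /= mdeg1. Qed.

Lemma hom6 (i1 i2 i3 i4 i5 i6 : 'I_10) :
  ('X_i1 * 'X_i2 * 'X_i3 * 'X_i4 * 'X_i5 * 'X_i6 : {mpoly C[10]}) \is 6.-homog.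
Proof.
exact: (dhomogM (dhomogM (dhomogM (dhomogM (dhomogM (homX i1) (homX i2)) (homX i3)) (homX i4)) (homX i5)) (homX i6)).
Qed.

Lemma homD d (p q : {mpoly C[10]}) : p \is d.-homog -> q \is d.-homog -> p + q \is d.-homog.
Proof. exact: rpredD. Qed.
Lemma homN d (p : {mpoly C[10]}) : p \is d.-homog -> - p \is d.-homog.
Proof. by rewrite dhomogN. Qed.
Lemma homMn d (p : {mpoly C[10]}) k : p \is d.-homog -> p *+ k \is d.-homog.
Proof. exact: rpredMn. Qed.

Lemma Ipoly_homog : Ipoly \is 6.-homog.
Proof.
rewrite /Ipoly /Ig.
repeat (lazymatch goal with
 | |- is_true ((_ + _) \in _) => apply: homD
 | |- is_true ((- _) \in _) => apply: homN
 | |- is_true ((_ *+ _) \in _) => apply: homMn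
 | |- _ => exact: hom6
 end).
Qed.

Lemma det2 (g : 'M[C]_2) : \det g = g ord0 ord0 * g ord_max ord_max - g ord0 ord_max * g ord_max ord0.
Proof.
rewrite (expand_det_row _ ord0) !big_ord_recl big_ord0 /cofactor !det_mx11 !mxE.
have l0 : lift ord0 (ord0 : 'I_1) = ord_max :> 'I_2 by apply: val_inj.
have l1 : lift ord_max (ord0 : 'I_1) = ord0 :> 'I_2 by apply: val_inj.
rewrite !l0 !l1 /=.
ring.
Qed.

Lemma Ipoly_inv : SL2invariant Ipoly.
Proof.
move=> g hdet v w /act_relP H.
rewrite !Ipoly_eval.
rewrite (@Ig_ext _ _ _ H).
by rewrite Ig_inv -det2 hdet expr1n mul1r.
Qed.

Lemma homog_scale (P : {mpoly C[10]}) d v (l : C) : P \is d.-homog ->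
  P.@[fun i => l * v i] = l ^+ d * P.@[v].
Proof.
move=> hP; rewrite !mevalE mulr_sumr; apply: eq_big_seq => m hm.
rewrite mulrCA; congr (_ * _).
rewrite (eq_bigr (fun i => l ^+ m i * v i ^+ m i)); last by move=> i _; rewrite exprMn.
rewrite big_split /= prodrXr -(dhomog_mf hP hm).
by rewrite -mdegE.
Qed.



Lemma grad (I : Type) (s : seq I) (P : pred I) (a : I -> C) (k : I -> nat) (b : C) (K0 : nat) :
  (forall z : C, z != 0 -> \sum_(x <- s | P x) a x * z ^+ k x = b * z ^+ K0) ->
  \sum_(x <- s | P x && (k x == K0)) a x = b.
Proof.
move=> h.
pose p : {poly C} := \sum_(x <- s | P x) a x *: 'X^(k x) - b *: 'X^K0.
have hp : forall z : C, z != 0 -> p.[z] = 0.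
  move=> z hz; rewrite /p hornerD hornerN horner_sum hornerZ hornerXn.
  rewrite (eq_bigr (fun x => a x * z ^+ k x)) ?h ?subrr // => x _.
  by rewrite hornerZ hornerXn.
have p0 : p = 0.
  apply: (@roots_geq_poly_eq0 _ p [seq (i.+1)%:R | i <- iota 0 (size p)]).
  - by apply/allP => z /mapP [i _ ->]; apply/eqP/hp; rewrite pnatr_eq0.
  - rewrite map_inj_uniq ?iota_uniq // => i j /eqP; rewrite eqr_nat => /eqP [] //.
  - by rewrite size_map size_iota.
have := congr1 (fun q : {poly C} => q`_K0) p0.
rewrite /p coefB coef_sumMXn coefZ coefXn eqxx mulr1 coef0 => /eqP.
by rewrite subr_eq0 => /eqP.
Qed.

Lemma prodfac (x : C) (e : 'I_10 -> nat) (v : 'I_10 -> C) (m : 'X_{1..10}) :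
  \prod_i (x ^+ e i * v i) ^+ m i = x ^+ (\sum_i e i * m i) * \prod_i v i ^+ m i.
Proof.
rewrite (eq_bigr (fun i => x ^+ (e i * m i) * v i ^+ m i)); last by move=> i _; rewrite exprMn exprM.
by rewrite big_split /= prodrXr.
Qed.

Definition ew (i : nat) : nat :=
  match i with 0 => 5 | 1 => 3 | 2 => 6 | 3 => 4 | 4 => 2 | 5 => 8 | 6 => 6 | 7 => 4 | 8 => 2 | _ => 0 end.
Definition Dt (t : C) (v : 'I_10 -> C) : 'I_10 -> C := fun i => t ^+ ew i * v i.

Lemma DtE t v k : (k < 10)%N -> Dt t v (inord k) = t ^+ ew k * v (inord k).
Proof. by move=> hk; rewrite /Dt inordK. Qed.

Definition gdiag (t s : C) : 'M[C]_2 :=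
  \matrix_(i, j) (if i == j then (if i == ord0 then t else s) else 0).

Lemma gdiagE t s : [/\ gdiag t s ord0 ord0 = t, gdiag t s ord0 ord_max = 0,
   gdiag t s ord_max ord0 = 0 & gdiag t s ord_max ord_max = s].
Proof. by rewrite /gdiag !mxE. Qed.

Lemma DtV t v : t != 0 -> Dt t v =1 (fun i => t ^+ 4 * actV t 0 0 t^-1 v i).
Proof.
move=> ht i.
rewrite -(inord_val i); move: (ltn_ord i); move: (nat_of_ord i) => k hk.
case: k hk => [|[|[|[|[|[|[|[|[|[|k]]]]]]]]]] hk; last by lia.
all: rewrite DtE // actVE //; cbn [ew actVn].
all: field; by [] || exact: ht.
Qed.

Lemma torus P d v t : SL2invariant P -> P \is d.-homog -> t != 0 ->
  P.@[Dt t v] = t ^+ (4 * d) * P.@[v].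
Proof.
move=> hI hH ht.
have hdet : \det (gdiag t t^-1) = 1.
  by rewrite det2; case: (gdiagE t t^-1) => -> -> -> ->; rewrite mulr0 subr0 divff.
have hact := hI _ hdet v _ (proj2 (act_relP _ v _) (fun i => erefl)).
move: hact; case: (gdiagE t t^-1) => -> -> -> -> hact.
rewrite (meval_eq _ (DtV t v ht)) (homog_scale _ _ _ _ hH) hact exprM.
done.
Qed.

Definition Kw (m : 'X_{1..10}) : nat := \sum_(i < 10) ew i * m i.

Lemma weight_sum P d v : SL2invariant P -> P \is d.-homog ->
  \sum_(m <- msupp P | Kw m == 4 * d) P@_m * \prod_i v i ^+ m i = P.@[v].
Proof.
move=> hI hH.
have h := @grad _ (msupp P) xpredT (fun m => P@_m * \prod_i v i ^+ m i) Kw (P.@[v]) (4 * d).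
apply: h => z hz.
rewrite mulrC -(torus _ _ v _ hI hH hz) mevalE.
apply: eq_bigr => m _.
by rewrite /Dt prodfac /Kw mulrAC mulrA.
Qed.



Lemma sum10 (F : 'I_10 -> nat) : (\sum_(i < 10) F i =
  F (inord 0) + (F (inord 1) + (F (inord 2) + (F (inord 3) + (F (inord 4) + (F (inord 5) +
  (F (inord 6) + (F (inord 7) + (F (inord 8) + (F (inord 9) + 0))))))))))%N.
Proof.
rewrite (eq_bigr (fun i : 'I_10 => F (inord i))); last by move=> i _; rewrite inord_val.
rewrite -(big_mkord xpredT (fun i => F (inord i))).
by rewrite /index_iota /= !big_cons big_nil.
Qed.

Lemma prod10 (F : 'I_10 -> C) : \prod_(i < 10) F i =
  F (inord 0) * (F (inord 1) * (F (inord 2) * (F (inord 3) * (F (inord 4) * (F (inord 5) *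
  (F (inord 6) * (F (inord 7) * (F (inord 8) * (F (inord 9) * 1))))))))).
Proof.
rewrite (eq_bigr (fun i : 'I_10 => F (inord i))); last by move=> i _; rewrite inord_val.
rewrite -(big_mkord xpredT (fun i => F (inord i))).
by rewrite /index_iota /= !big_cons big_nil.
Qed.

Lemma mnm10 (m m' : 'X_{1..10}) : (forall k, (k < 10)%N -> m (inord k) = m' (inord k)) -> m = m'.
Proof. by move=> h; apply/mnmP => i; rewrite -(inord_val i); apply: h. Qed.

Definition mstar : 'X_{1..10} := (U_(@inord 9 0) *+ 2 + U_(@inord 9 8))%MM.

Lemma inord_eq (a b : nat) : (a < 10)%N -> (b < 10)%N -> (@inord 9 a == inord b) = (a == b).
Proof. by move=> ha hb; rewrite -(inj_eq val_inj) /= !inordK. Qed.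

Lemma mstarE k : (k < 10)%N -> mstar (inord k) = (if k == 0 then 2 else if k == 8 then 1 else 0)%N.
Proof.
move=> hk; rewrite /mstar mnmDE mulmnE !mnm1E !inord_eq //.
by case: k hk => [|[|[|[|[|[|[|[|[|[|k]]]]]]]]]] hk.
Qed.

Lemma KwE m : Kw m = (5 * m (inord 0) + 3 * m (inord 1) + 6 * m (inord 2) + 4 * m (inord 3) + 2 * m (inord 4)
  + 8 * m (inord 5) + 6 * m (inord 6) + 4 * m (inord 7) + 2 * m (inord 8) + 0 * m (inord 9))%N.
Proof. rewrite /Kw sum10 !inordK //; cbn [ew]; lia. Qed.

Lemma mdeg10 (m : 'X_{1..10}) : mdeg m = (m (inord 0) + m (inord 1) + m (inord 2) + m (inord 3) + m (inord 4)
  + m (inord 5) + m (inord 6) + m (inord 7) + m (inord 8) + m (inord 9))%N.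
Proof. rewrite mdegE sum10; lia. Qed.

Lemma prod_ne0 (v : 'I_10 -> C) (m : 'X_{1..10}) i :
  \prod_j v j ^+ m j != 0 -> v i = 0 -> m i = 0%N.
Proof.
move=> h vi; apply/eqP; apply: contraNT h => hm.
by rewrite (bigD1 i) //= vi expr0n (negbTE hm) mul0r.
Qed.

Lemma sum_single (S : seq 'X_{1..10}) (Pr : pred 'X_{1..10}) (F : 'X_{1..10} -> C) m0 :
  uniq S -> Pr m0 -> (m0 \notin S -> F m0 = 0) ->
  (forall m, m \in S -> Pr m -> F m != 0 -> m = m0) ->
  \sum_(m <- S | Pr m) F m = F m0.
Proof.
move=> uS pm0 hnot h.
rewrite big_mkcond /=.
case: (boolP (m0 \in S)) => hin.
- rewrite (bigD1_seq m0) //= pm0 big1_seq ?addr0 // => m /andP [ne mS].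
  case: ifP => // pm; apply/eqP; apply: contraNT ne => Fm.
  by rewrite (h m mS pm Fm) eqxx.
- rewrite hnot // big1_seq // => m [] mS.
  case: ifP => // pm; apply/eqP; apply: contraNT hin => Fm.
  by rewrite -(h m mS pm Fm).
Qed.

Lemma sum_zero (S : seq 'X_{1..10}) (Pr : pred 'X_{1..10}) (F : 'X_{1..10} -> C) :
  (forall m, m \in S -> Pr m -> F m != 0 -> False) ->
  \sum_(m <- S | Pr m) F m = 0.
Proof.
move=> h; rewrite big_seq_cond big1 // => m /andP [mS pm].
by apply/eqP; apply: contraT => Fm; case: (h m mS pm Fm).
Qed.

Definition mx22 (a b c d : C) : 'M[C]_2 :=
  \matrix_(i, j) (if i == ord0 then (if j == ord0 then a else b) else (if j == ord0 then c else d)).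

Lemma inv_apply P a b c d v : SL2invariant P -> a * d - b * c = 1 ->
  P.@[actV a b c d v] = P.@[v].
Proof.
move=> hI hdet.
have e : [/\ mx22 a b c d ord0 ord0 = a, mx22 a b c d ord0 ord_max = b,
   mx22 a b c d ord_max ord0 = c & mx22 a b c d ord_max ord_max = d] by rewrite /mx22 !mxE.
case: e => e1 e2 e3 e4.
have hd : \det (mx22 a b c d) = 1 by rewrite det2 e1 e2 e3 e4.
apply: (hI _ hd v); apply/act_relP => i.
by rewrite e1 e2 e3 e4.
Qed.



Lemma p0E k : (k < 10)%N -> p0 (inord k) = if k == 0%N then 1 else if k == 8%N then 4%:R else 0.
Proof. by move=> hk; have e : val (@inord 9 k) = k := inordK hk; rewrite /p0 e. Qed.

Lemma prod_p0_mstar : \prod_i p0 i ^+ mstar i = 4%:R.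
Proof.
rewrite prod10 !mstarE // !p0E //=.
ring.
Qed.

Lemma Kw_mstar : Kw mstar = 12%N.
Proof. by rewrite KwE !mstarE. Qed.

Lemma part2_p0 P d : SL2invariant P -> P \is d.-homog -> (2 <= d <= 5)%N ->
  P.@[p0] = if d == 3%N then P@_mstar * 4%:R else 0.
Proof.
move=> hI hH hd; rewrite -(weight_sum _ _ p0 hI hH).
have key : forall m, m \in msupp P -> Kw m == (4 * d)%N -> P@_m * \prod_i p0 i ^+ m i != 0 ->
    d = 3%N /\ m = mstar.
  move=> m hm /eqP hk hne.
  have hpr : \prod_i p0 i ^+ m i != 0 by apply: contraNneq hne => ->; rewrite mulr0.
  have z k : (k < 10)%N -> k != 0%N -> k != 8%N -> m (inord k) = 0%N.
    by move=> hk1 h0 h8; apply: (@prod_ne0 p0 m (inord k) hpr); rewrite p0E // (negbTE h0) (negbTE h8).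
  have z1 := z 1%N isT isT isT; have z2 := z 2%N isT isT isT; have z3 := z 3%N isT isT isT.
  have z4 := z 4%N isT isT isT; have z5 := z 5%N isT isT isT; have z6 := z 6%N isT isT isT.
  have z7 := z 7%N isT isT isT; have z9 := z 9%N isT isT isT.
  have hdeg : mdeg m = d by exact: (dhomog_mf hH hm).
  move: hk hdeg; rewrite KwE mdeg10 => hk hdeg.
  have d3 : d = 3%N by lia.
  split=> //; apply: mnm10 => k hk'; rewrite mstarE //.
  case: k hk' => [|[|[|[|[|[|[|[|[|[|k]]]]]]]]]] hk' //=; lia.
case: eqP => hd3.
- subst d.
  rewrite (@sum_single _ _ _ mstar) ?msupp_uniq //.
  + by rewrite prod_p0_mstar.
  + by rewrite Kw_mstar.
  + by move=> hn; rewrite (memN_msupp_eq0 hn) mul0r.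
  + by move=> m hm hk hne; case: (key m hm hk hne).
- apply: sum_zero => m hm hk hne; case: (key m hm hk hne) => hd' _; exact: hd3 hd'.
Qed.



Definition xe (i : nat) : nat := match i with 5 => 4 | 6 => 3 | 7 => 2 | 8 => 1 | _ => 0 end.
Definition kap (i : nat) : C :=
  match i with 0 => 1 | 5 => 1 | 6 => 4%:R | 7 => 6%:R | 8 => 4%:R | 9 => 1 | _ => 0 end.
Definition qc (c : C) : 'I_10 -> C := fun i => c ^+ xe i * kap i.
Definition kapv : 'I_10 -> C := fun i => kap i.

Lemma qcE c k : (k < 10)%N -> qc c (inord k) = c ^+ xe k * kap k.
Proof. by move=> hk; rewrite /qc inordK. Qed.
Lemma kapvE k : (k < 10)%N -> kapv (inord k) = kap k.
Proof. by move=> hk; rewrite /kapv inordK. Qed.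

Definition Xm (m : 'X_{1..10}) : nat := \sum_(i < 10) xe i * m i.
Lemma XmE m : Xm m = (4 * m (inord 5) + 3 * m (inord 6) + 2 * m (inord 7) + m (inord 8))%N.
Proof. rewrite /Xm sum10 !inordK //; cbn [xe]; lia. Qed.

Lemma q_orbit P c : SL2invariant P -> P.@[qc c] = P.@[qc 0].
Proof.
move=> hI.
rewrite -(@inv_apply P 1 0 c 1 (qc 0) hI); last by ring.
apply: meval_eq => i.
rewrite -(inord_val i); move: (ltn_ord i); move: (nat_of_ord i) => k hk.
case: k hk => [|[|[|[|[|[|[|[|[|[|k]]]]]]]]]] hk; last by lia.
all: rewrite qcE // actVE //; cbn [actVn xe kap]; rewrite !qcE //; cbn [xe kap]; ring.
Qed.

Lemma q0_zero P : SL2invariant P -> P \is 3.-homog -> P.@[qc 0] = 0.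
Proof.
move=> hI hH; rewrite -(weight_sum _ _ _ hI hH).
apply: sum_zero => m hm /eqP hk hne.
have hpr : \prod_i qc 0 i ^+ m i != 0 by apply: contraNneq hne => ->; rewrite mulr0.
have z k : (0 < k < 9)%N -> m (inord k) = 0%N.
  move=> hk1; apply: (@prod_ne0 (qc 0) m (inord k) hpr); rewrite qcE; last by lia.
  by case: k hk1 => [|[|[|[|[|[|[|[|[|k]]]]]]]]] hk1 //=; rewrite ?expr0n ?mul0r ?mulr0.
have z1 := z 1%N isT; have z2 := z 2%N isT; have z3 := z 3%N isT; have z4 := z 4%N isT.
have z5 := z 5%N isT; have z6 := z 6%N isT; have z7 := z 7%N isT; have z8 := z 8%N isT.
move: hk; rewrite KwE; lia.
Qed.

Lemma prod_kap_mstar : \prod_i kapv i ^+ mstar i = 4%:R.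
Proof. rewrite prod10 !mstarE // !kapvE //=. ring. Qed.

Lemma q_coef P : SL2invariant P -> P \is 3.-homog -> P@_mstar = 0.
Proof.
move=> hI hH.
have H : forall c : C, c != 0 -> \sum_(m <- msupp P | Kw m == (4 * 3)%N)
    (P@_m * \prod_i kapv i ^+ m i) * c ^+ Xm m = 0 * c ^+ 1.
  move=> c _; rewrite mul0r -[RHS](q0_zero P hI hH) -(q_orbit P c hI) -(weight_sum _ _ _ hI hH).
  apply: eq_bigr => m _.
  by rewrite /qc (prodfac c (fun i => xe i) kapv m) /Xm mulrAC mulrA.
have := @grad _ _ _ _ _ _ _ H.
rewrite (@sum_single _ _ _ mstar) ?msupp_uniq //.
- rewrite prod_kap_mstar => /eqP; rewrite mulf_eq0 pnatr_eq0 orbF => /eqP //.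
- by rewrite Kw_mstar XmE !mstarE.
- by move=> hn; rewrite (memN_msupp_eq0 hn) mul0r.
- move=> m hm /andP [/eqP hk /eqP hx] hne.
  have hpr : \prod_i kapv i ^+ m i != 0 by apply: contraNneq hne => ->; rewrite mulr0.
  have z k : (0 < k < 5)%N -> m (inord k) = 0%N.
    move=> hk1; apply: (@prod_ne0 kapv m (inord k) hpr); rewrite kapvE; last by lia.
    by case: k hk1 => [|[|[|[|[|k]]]]] hk1.
  have z1 := z 1%N isT; have z2 := z 2%N isT; have z3 := z 3%N isT; have z4 := z 4%N isT.
  have hdeg : mdeg m = 3%N by exact: (dhomog_mf hH hm).
  move: hk hx hdeg; rewrite KwE XmE mdeg10 => hk hx hdeg.
  apply: mnm10 => k hk'; rewrite mstarE //.
  case: k hk' => [|[|[|[|[|[|[|[|[|[|k]]]]]]]]]] hk' //=; lia.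
Qed.



Lemma part2 P : SL2invariant P ->
  forall d : nat, (2 <= d <= 5)%N -> P \is d.-homog -> P.@[p0] = 0.
Proof.
move=> hI d hd hH; rewrite (part2_p0 _ _ hI hH hd).
case: eqP => // e; subst d; by rewrite (q_coef _ hI hH) mul0r.
Qed.

Lemma Ip0 : Ig p0 = - 48%:R.
Proof. rewrite /Ig !p0E //=. ring. Qed.

Lemma Ip0_ne0 : Ig p0 != 0.
Proof. by rewrite Ip0 oppr_eq0 pnatr_eq0. Qed.

Lemma nonnull : ~ in_nullcone p0.
Proof.
move=> h; have := h Ipoly Ipoly_inv 6%N isT Ipoly_homog.
by rewrite Ipoly_eval => /eqP; rewrite (negbTE Ip0_ne0).
Qed.

Lemma part1 : ~ (exists f : 'I_7 -> {mpoly C[10]},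
       is_hsop f /\ forall i : 'I_7, f i \is (nth 0%N [:: 2; 2; 3; 3; 3; 4; 5] i).-homog)%N.
Proof.
case=> f [[hf _ hint] hdeg].
have fz : forall (l : C) i, (f i).@[fun j => l * p0 j] = 0.
  move=> l i; have hd := hdeg i.
  rewrite (homog_scale _ _ _ _ hd) (part2 _ (proj1 (hf i)) _ _ hd) ?mulr0 //.
  by case: i {hd} => [[|[|[|[|[|[|[|k]]]]]]] hi].
case: (hint _ Ipoly_inv) => Q hQ hroot.
pose S := map_poly (meval (fun _ : 'I_7 => 0 : C)) Q.
have hS : forall l : C, S.[l ^+ 6 * Ig p0] = 0.
  move=> l.
  have := congr1 (meval (fun j => l * p0 j)) hroot.
  rewrite rmorph0 -horner_map.
  have -> : map_poly (meval (fun j => l * p0 j)) (map_poly (comp_mpoly [tuple f i | i < 7]) Q) = S.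
    apply/polyP => i; rewrite !coef_map /= comp_mpoly_meval; apply: meval_eq => j.
    by rewrite tnth_map tnth_ord_tuple fz.
  move=> h; rewrite -h; congr (S.[_]).
  by rewrite -Ipoly_eval -(homog_scale _ _ p0 l Ipoly_homog).
have S0 : S = 0.
  apply: (@roots_geq_poly_eq0 _ S [seq i%:R | i <- iota 0 (size S)]).
  - apply/allP => y /mapP [i _ ->]; apply/eqP.
    by have := hS (6.-root (i%:R / Ig p0)); rewrite rootCK // divfK // Ip0_ne0.
  - rewrite map_inj_uniq ?iota_uniq // => a b /eqP; rewrite eqr_nat => /eqP //.
  - by rewrite size_map size_iota.
have : S \is monic by rewrite /S monic_map.
by move=> /monic_neq0; rewrite S0 eqxx.
Qed.

Theorem mainTheorem8 :
  ~ (exists f : 'I_7 -> {mpoly C[10]},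
       is_hsop f /\ forall i : 'I_7, f i \is (nth 0%N [:: 2; 2; 3; 3; 3; 4; 5] i).-homog)%N
  /\ (forall P : {mpoly C[10]}, SL2invariant P ->
        forall d : nat, (2 <= d <= 5)%N -> P \is d.-homog -> P.@[p0] = 0)
  /\ ~ in_nullcone p0.
Proof. split; [exact: part1 | split; [exact: part2 | exact: nonnull]]. Qed.
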